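(* Let $1\le j\le s$ and $B>j$ be natural numbers and let $d=4s\sum_{1\le i\le j+1}B^i$. For all sufficiently large natural numbers $q$ there exists $\bar x\in\mathbb{N}^s$ such that for all $\bar a\in\{0,\dots,B-1\}^s$ and all $c\in\{0,\dots,B-1\}$: (a) if $\bar a\ne\bar 0$ then $\frac{q}{d}<\bar a^\top\bar x-c$; (b) $\bar a^\top\bar x-c<qd$; and (c) $\bar a^\top\bar x-c=q$ if and only if $\bar a=(1,\dots,1,0,\dots,0)$ (with exactly $j$ leading entries $1$) and $c=0$.
   Context: $\bar a^\top\bar x=\sum_{i=1}^s a_ix_i$. *)

(* Defs.v *)
From mathcomp Require Import all_boot all_order all_algebra.
Set Implicit Arguments. Unset Strict Implicit. Unset Printing Implicit Defensive.
Import Order.TTheory GRing.Theory Num.Theory.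

Definition dotn (s : nat) (a x : 'I_s -> nat) : nat := (\sum_(i < s) a i * x i)%N.

Definition lead_ones (s j : nat) : 'I_s -> nat := fun i => (i < j)%N : nat.

(* Main.v *)
Require Import Defs.
From mathcomp Require Import all_boot all_order all_algebra.
From mathcomp Require Import zify ring lra.
Import Order.TTheory GRing.Theory Num.Theory.

Lemma digits (B:nat) (hB: 1<B) : forall j s (f : nat -> nat), j <= s -> (forall i, i < j -> f i < B) ->
  \sum_(0<=i<s) f i * B^(minn i j) = \sum_(0<=i<j) B^i -> forall i, i < s -> f i = (i < j).
Proof.
elim=> [|j IH] s f hjs hf.
  under eq_bigr do rewrite minn0 expn0 muln1.
  rewrite [RHS]big_geq // => /eqP; rewrite sum_nat_seq_eq0 => /allP H i his.
  apply/eqP; rewrite ltn0; have := H i; rewrite mem_iota /= add0n subn0 his; by apply.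
case: s hjs => [//|s] hjs.
rewrite !big_nat_recl // min0n expn0 muln1.
under eq_bigr do rewrite minnSS expnS mulnCA.
under [X in _ = _ + X]eq_bigr do rewrite expnS.
rewrite -!big_distrr /=.
set X := \sum_(0 <= i < s) _. set Y := \sum_(0 <= i < j) _ => E.
have f0 : f 0 < B by apply: hf.
have [XY f01] : X = Y /\ f 0 = 1.
  have : X <= Y. { rewrite leqNgt; apply/negP => lt; move: E; nia. }
  have : Y <= X. { rewrite leqNgt; apply/negP => lt; move: E; nia. }
  move=> h1 h2; have XY : X = Y by apply/eqP; rewrite eqn_leq h1 h2.
  split=> //; move: E; rewrite XY; lia.
have := IH s (fun i => f i.+1) hjs (fun i hi => hf i.+1 hi) XY.
move=> H [|i] hi /=; first exact: f01.
exact: H.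
Qed.

Lemma ones_sum B j s : j <= s ->
  \sum_(0<=i<s) (i<j) * B^(minn i j) = \sum_(0<=i<j) B^i.
Proof.
move=> hjs; rewrite (@big_cat_nat _ _ _ j) //=.
rewrite [X in _ + X]big1_seq ?addn0; last first.
  move=> i /andP[_]; rewrite mem_iota => /andP[hi _]. by rewrite ltnNge hi.
apply: eq_big_nat => i /andP[_ hi]. by rewrite hi mul1n (minn_idPl (ltnW hi)).
Qed.

Local Open Scope ring_scope.

Theorem lemma6p8 (s j B : nat) (hj1 : (1 <= j)%N) (hjs : (j <= s)%N) (hB : (j < B)%N) :
  let d : nat := (4 * s * \sum_(1 <= i < j.+2) B ^ i)%N in
  exists Q : nat, forall q : nat, (Q <= q)%N ->
    exists x : 'I_s -> nat,
      forall (a : 'I_s -> 'I_B) (c : 'I_B),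
        let v : rat := ((dotn (fun i => nat_of_ord (a i)) x)%:R - (nat_of_ord c)%:R) in
        ((exists i, nat_of_ord (a i) != 0%N) -> (q%:R / d%:R < v)) /\
        (v < q%:R * d%:R) /\
        (v = q%:R <-> ((forall i, nat_of_ord (a i) = lead_ones j i) /\ nat_of_ord c = 0%N)).
Proof.
case: s hjs => [|s'] hjs; first by move: hj1 hjs; lia.
move=> d.
have B1 : (1 < B)%N by lia.
set S := (\sum_(0 <= i < j) B ^ i)%N.
have S1 : (0 < S)%N.
  rewrite /S (@big_cat_nat _ _ _ 1) //= big_nat1 expn0; lia.
set p := (B ^ j)%N.
have p1 : (0 < p)%N by rewrite expn_gt0; lia.
have hd : d = (4 * s'.+1 * (B * (S + p)))%N.
  rewrite /d big_add1 /=; congr (_ * _)%N.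
  under eq_bigr do rewrite expnS.
  by rewrite -big_distrr /= big_nat_recr.
set T0 := (d * B + B * S + B + 1)%N.
exists (T0 * S)%N => q hq.
set t := (q %/ S)%N. set r := (q %% S)%N.
have ht : (T0 <= t)%N by rewrite /t leq_divRL.
have qe : q = (t * S + r)%N by rewrite /t /r -divn_eq.
have hr : (r < S)%N by rewrite /r ltn_pmod.
have hT : (d * B + B * S + B + 1 <= t)%N by [].
have q0 : (0 < q)%N.
  apply: leq_trans hq; rewrite muln_gt0 S1 andbT /T0; lia.
exists (fun i : 'I_s'.+1 => t * B^(minn i j) + (if nat_of_ord i == 0%N then r else 0))%N.
move=> a c v.
set D := (\sum_(i < s'.+1) a i * B^(minn i j))%N.
rewrite {}/v; set dot := dotn _ _.
have hdot : dot = (t * D + a ord0 * r)%N.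
  rewrite /dot /dotn. under eq_bigr do rewrite mulnDr. rewrite big_split /=. congr (_+_)%N.
    rewrite /D big_distrr; apply: eq_bigr => i _ /=; by rewrite mulnCA.
  by rewrite big_ord_recl /= big1 ?addn0 // => i _; rewrite muln0.
have aB i : (a i < B)%N := ltn_ord (a i).
have cB : (c < B)%N := ltn_ord c.
have d0 : (0 < d)%N by rewrite hd !muln_gt0 addn_gt0 S1; lia.
have dS : (4 * S <= d)%N.
  rewrite hd -mulnA leq_mul2l /=.
  apply: (@leq_trans (1 * (1 * (S + p)))); first by rewrite !mul1n leq_addr.
  rewrite leq_mul // leq_mul //; lia.
have dotge : (exists i, nat_of_ord (a i) != 0%N) -> (t <= dot)%N.
  case=> i ai0; rewrite /dot /dotn (bigD1 i) //=.
  apply: leq_trans (leq_addr _ _).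
  have hm : (1 <= B ^ minn i j)%N by rewrite expn_gt0; lia.
  have ai1 : (0 < a i)%N by rewrite lt0n.
  apply: leq_trans (leq_pmull _ ai1).
  apply: leq_trans (leq_addr _ _).
  by rewrite leq_pmulr.
have dotle : (dot <= s'.+1 * (B * (q * p)))%N.
  rewrite /dot /dotn -[X in (_ <= X * _)%N]card_ord -sum_nat_const.
  apply: leq_sum => i _.
  have : (B ^ minn i j <= p)%N by rewrite /p leq_exp2l //; lia.
  move=> hm.
  apply: leq_mul; first exact: ltnW.
  have e1 : ((if nat_of_ord i == 0%N then r else 0) <= r)%N by case: ifP.
  have e2 : (t * B ^ minn i j <= t * p)%N by rewrite leq_mul.
  have e3 : (t * p <= t * S * p)%N by rewrite leq_mul // leq_pmulr.
  have e4 : (r <= r * p)%N by rewrite leq_pmulr.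
  rewrite qe mulnDl; lia.
split.
  move=> hne; rewrite ltr_pdivrMr ?ltr0n //.
  have H : (q + d * c < d * dot)%N.
    have h0 := dotge hne.
    have h1 : (d * t <= d * dot)%N by rewrite leq_mul.
    have h2 : (4 * S * t <= d * t)%N by rewrite leq_mul.
    have h3 : (S <= S * t)%N by rewrite leq_pmulr //; lia.
    have h4 : (d * B + 1 <= S * t)%N.
      apply: leq_trans (leq_pmull _ S1); lia.
    have h5 : (d * c <= d * B)%N by rewrite leq_mul // ltnW.
    have qe' : q = (S * t + r)%N by rewrite mulnC.
    rewrite -mulnA in h2.
    lia.
  move: H; rewrite -(ltr_nat rat) natrD !natrM => H; nra.
split.
  have H : (dot < q * d)%N.
    apply: leq_ltn_trans dotle _; rewrite hd.
    have -> : (q * (4 * s'.+1 * (B * (S + p))) = 4 * (s'.+1 * (B * (q * p))) + 4 * (s'.+1 * (B * (q * S))))%N by ring.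
    have : (0 < s'.+1 * (B * (q * p)))%N by rewrite !muln_gt0 q0 p1; lia.
    lia.
  move: H; rewrite -(ltr_nat rat) natrM => H.
  have : (0 : rat) <= c%:R by rewrite ler0n.
  lra.
have vq : ((dot%:R - c%:R : rat) = q%:R) <-> (dot = q + c)%N.
  split => [h|->]; last by rewrite natrD; lra.
  apply/eqP; rewrite -(eqr_nat rat) natrD; apply/eqP; lra.
rewrite vq.
have hA i : a i = (a (inord i : 'I_s'.+1)) :> nat by rewrite inord_val.
have hD : D = (\sum_(0 <= i < s'.+1) a (inord i) * B ^ minn i j)%N.
  by rewrite big_mkord; apply: eq_bigr => i _; rewrite -hA.
split.
  move=> hq'.
  have hDS : D = S.
    have h1 : (a ord0 * r <= B * S)%N by apply: leq_mul; [exact: ltnW (aB _) | exact: ltnW].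
    case: (ltngtP D S) => // hc.
      have : (t * D + t <= t * S)%N by rewrite addnC -mulnS leq_mul.
      move: hq'; rewrite hdot qe; lia.
    have : (t * S + t <= t * D)%N by rewrite addnC -mulnS leq_mul.
    have : (S <= B * S)%N by rewrite leq_pmull //; lia.
    move: hq'; rewrite hdot qe; lia.
  have dig := @digits B B1 j s'.+1 (fun i => a (inord i)) hjs (fun i _ => aB _) (etrans (esym hD) hDS).
  have hai : forall i, nat_of_ord (a i) = lead_ones j i.
    by move=> i; rewrite hA dig.
  split => //.
  move: hq'; rewrite hdot hai qe hDS /lead_ones /=; lia.
case=> hai ->; rewrite addn0 hdot hai /lead_ones /= hj1 mul1n qe; congr (_ * _ + _)%N.
rewrite hD /S -(@ones_sum B j s'.+1 hjs); apply: eq_big_nat => i /andP[_ hi].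
by rewrite hai /lead_ones inordK.
Qed.
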